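(* If $R$ is a weakly generalized p.q.-Baer $*$-ring, then the involution of $R$ is quasi-proper, i.e. for $x\in R$, $xRx^*=0$ implies $x^n=0$ for some $n\in\mathbb N$.
   Context: A $*$-ring is a ring with an involution; a projection is $e$ with $e=e^*=e^2$. A $*$-ring $R$ is a weakly generalized p.q.-Baer $*$-ring if for every $x\in R$ there exist a central projection $e$ and $n\in\mathbb N$ such that $x^ne=x^n$ and, for all $y\in R$, $(xR)^ny=\{0\}$ if and only if $ey=0$. ($R$ need not have a unity.) *)

(* Defs.v *)
From HB Require Import structures.
From mathcomp Require Import all_boot all_algebra.
Set Implicit Arguments. Unset Strict Implicit. Unset Printing Implicit Defensive.
Import GRing.Theory.
Local Open Scope ring_scope.

Record is_star_rng (T : zmodType) (mul : T -> T -> T) (star : T -> T) : Prop := {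
  srng_mulA : forall x y z, mul x (mul y z) = mul (mul x y) z;
  srng_mulDl : forall x y z, mul (x + y) z = mul x z + mul y z;
  srng_mulDr : forall x y z, mul x (y + z) = mul x y + mul x z;
  srng_starD : forall x y, star (x + y) = star x + star y;
  srng_starM : forall x y, star (mul x y) = mul (star y) (star x);
  srng_starK : forall x, star (star x) = x
}.

(* positive power x^n (meaningful for n >= 1; x^1 = x) *)
Definition rpow (T : Type) (mul : T -> T -> T) (x : T) (n : nat) : T :=
  iter n.-1 (mul x) x.

Definition central_projection (T : zmodType) (mul : T -> T -> T) (star : T -> T)
  (e : T) : Prop :=
  e = star e /\ mul e e = e /\ forall z, mul e z = mul z e.

(* (xR)^n y = {0}: every product (x r_1)(x r_2)...(x r_n) y vanishes *)
Definition xRpow_ann (T : zmodType) (mul : T -> T -> T) (x : T) (n : nat) (y : T)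
  : Prop :=
  forall s : seq T, size s = n ->
    foldr (fun r acc => mul (mul x r) acc) y s = 0.

Definition weakly_gen_pq_Baer (T : zmodType) (mul : T -> T -> T) (star : T -> T)
  : Prop :=
  forall x : T, exists (e : T) (n : nat),
    [/\ (0 < n)%N, central_projection mul star e,
        mul (rpow mul x n) e = rpow mul x n &
        forall y : T, xRpow_ann mul x n y <-> mul e y = 0].

Definition quasi_proper (T : zmodType) (mul : T -> T -> T) (star : T -> T) : Prop :=
  forall x : T, (forall r : T, mul (mul x r) (star x) = 0) ->
    exists n : nat, (0 < n)%N /\ rpow mul x n = 0.

(* Main.v *)
Require Import Defs.
From mathcomp Require Import all_boot all_algebra.
Import GRing.Theory.
Local Open Scope ring_scope.

Theorem mainTheorem8 (T : zmodType) (mul : T -> T -> T) (star : T -> T)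
  (HR : is_star_rng mul star) (HB : weakly_gen_pq_Baer mul star) :
  quasi_proper mul star.
Proof.
case: HR => mA mDl mDr sD sM sK.
have m0 : forall a, mul a 0 = 0.
  move=> a; have := mDr a 0 0; rewrite addr0 => h.
  by apply: (@addrI _ (mul a 0)); rewrite addr0 -h.
have s0 : star 0 = 0.
  have := sD 0 0; rewrite addr0 => h.
  by apply: (@addrI _ (star 0)); rewrite addr0 -h.
move=> x Hx.
have [e [n [n0 [ep [ee ec]] Hxe Hann]]] := HB x.
have Hy : xRpow_ann mul x n (star x).
  move=> s; case: n n0 Hxe Hann => // n _ _ _.
  elim: s n => // r s IH n /= [] Hs.
  case: s IH Hs => [|r' s] IH Hs /=; first by rewrite Hx.
  by rewrite /= in IH; rewrite (IH n.-1) ?m0 //= -Hs.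
have H1 : mul e (star x) = 0 by apply/Hann.
have H2 : mul x e = 0.
  by have := congr1 star H1; rewrite sM sK -ep s0.
exists n; split => //; rewrite -Hxe.
case: n n0 {Hxe Hann Hy} => // n _.
elim: n => [|n IH] /=; first by [].
by rewrite -mA IH m0.
Qed.
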